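(* Let $T$ be a lifted graph, $F\colon T\to T$ a continuous sun-like map of degree 1, ${\cal P}$ a basic partition of $F$ and ${\cal G}$ its covering graph, and let $\alpha,\beta$ be vertices of ${\cal G}$. (i) All arrows starting from $\alpha$, except at most one, end at a vertex of the basis. (ii) If $\alpha\to\beta$ and $H(\beta)>0$, then $H(\beta)=H(\alpha)+1$.
   Context: A lifted graph is a connected topological space $T$ with a homeomorphism $h\colon\mathbb R\to h(\mathbb R)\subset T$ and a homeomorphism $\tau\colon T\to T$ such that $\tau(h(x))=h(x+1)$, the closure of each connected component of $T\setminus h(\mathbb R)$ is a topological finite graph meeting $h(\mathbb R)$ in exactly one point, and only finitely many such components have closure meeting $h([0,1])$. Identify $h(\mathbb R)$ with $\mathbb R$, write $x+m:=\tau^m(x)$; $r_{\mathbb R}\colon T\to\mathbb R$ is the identity on $\mathbb R$ and maps a component $C$ of $T\setminus\mathbb R$ to the point $\overline C\cap\mathbb R$. $F$ has degree 1 if $F(x+1)=F(x)+1$. Let $T_{\mathbb R}:=\overline{\bigcup_{n\ge0}F^n(\mathbb R)}$, $X:=\overline{T\setminus T_{\mathbb R}}\cap r_{\mathbb R}^{-1}([0,1))$. $F$ is sun-like if $(T\setminus T_{\mathbb R})\cap r_{\mathbb R}^{-1}([0,1))$ consists of finitely many intervals with pairwise disjoint closures $X^i$, $i\in\Lambda$ (branches), each a compact interval meeting $T_{\mathbb R}$ in one endpoint $\min X^i$ (fixing the order of $X^i$). A basic partition is a finite family ${\cal P}=\{X^i_j\}$ of pairwise disjoint nonempty compact intervals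 $X^i_1<\dots<X^i_{N_i}$ in $X^i$, with $\ell(X^i_j)\in\Lambda$, $p(X^i_j)\in\mathbb Z$, such that $F(X^i_j)\subset(X^{\ell(X^i_j)}+p(X^i_j))\cup\mathrm{Int}(T_{\mathbb R})$, $F(\min X^i_j)=\min X^{\ell(X^i_j)}+p(X^i_j)$, and $F(X\setminus\bigcup X^i_j)\cap(X+\mathbb Z)=\emptyset$. For $A_0,\dots,A_n\in{\cal P}$, $\langle A_0\dots A_n\rangle:=F^n(\{x\in T: F^i(x)\in A_i+\mathbb Z,\ 0\le i\le n\})\cap X$. $A_0\dots A_n\sim B_0\dots B_m$ iff for some $k\le\min(n,m)$, $A_{n-i}=B_{m-i}$ ($0\le i\le k$) and $\langle A_0\dots A_{n-k}\rangle=A_{n-k}=B_{m-k}=\langle B_0\dots B_{m-k}\rangle$. The covering graph ${\cal G}$: vertices are classes $A_0\dots A_n/\!\sim$ with $\langle A_0\dots A_n\rangle\ne\emptyset$; arrow $\alpha\to\beta$ iff $\alpha=A_0\dots A_n/\!\sim$, $\beta=A_0\dots A_nA_{n+1}/\!\sim$ for some $A_i\in{\cal P}$. The significant part of $A_0\dots A_n$ is $A_i\dots A_n$ with $i$ the largest index such that $A_0\dots A_n\sim A_i\dots A_n$; the height of the class $\alpha$ is $H(\alpha):=n-i$. The basis is the set of vertices of height $0$, i.e. $\{A/\!\sim: A\in{\cal P}\}$. *)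

(* Defs.v *)
From HB Require Import structures.
From mathcomp Require Import all_boot all_order all_algebra.
From mathcomp Require Import all_classical all_reals all_analysis.
Set Implicit Arguments. Unset Strict Implicit. Unset Printing Implicit Defensive.
Import Order.TTheory GRing.Theory Num.Theory.
Import numFieldNormedType.Exports.
Local Open Scope classical_set_scope.
Local Open Scope ring_scope.

Section LiftedGraphs.
Variables (R : realType) (T : topologicalType).

Definition homeo_onto_image (D : set R) (g : R -> T) : Prop :=
  [/\ {within D, continuous g},
      {in D &, injective g} &
      forall U : set R, open U ->
        exists V : set T, open V /\ g @` (U `&` D) = V `&` (g @` D)].

Definition finite_top_graph (G : set T) : Prop :=
  [/\ compact G, connected G,
      (forall x y, G x -> G y -> x <> y ->
         exists U V : set T, [/\ open U, open V, U x, V y & U `&` V = set0]) &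
      exists V : set T,
        [/\ finite_set V, V `<=` G,
            finite_set [set C : set T | exists x, (G `\` V) x /\
                                   C = connected_component (G `\` V) x] &
            forall x, (G `\` V) x ->
              exists g : R -> T, homeo_onto_image `]0, 1[ g /\
                 g @` `]0, 1[ = connected_component (G `\` V) x]].

Definition lifted_graph (h : R -> T) (tau tauinv : T -> T) : Prop :=
  [/\ connected [set: T] /\ homeo_onto_image setT h,
      [/\ continuous tau, continuous tauinv, cancel tau tauinv & cancel tauinv tau],
      (forall x, tau (h x) = h (x + 1)),
      (forall x, ~ range h x ->
         let C := connected_component (~` range h) x in
         finite_top_graph (closure C) /\
         exists y : R, closure C `&` range h = [set h y]) &
      finite_set [set C : set T | exists x, ~ range h x /\
          C = connected_component (~` range h) x /\
          closure C `&` (h @` `[0, 1]) !=set0]].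

(* x + m := tau^m (x), m : int *)
Definition tpow (tau tauinv : T -> T) (m : int) (x : T) : T :=
  match m with
  | Posz n => iter n tau x
  | Negz n => iter n.+1 tauinv x
  end.

Definition transZ (tau tauinv : T -> T) (A : set T) : set T :=
  \bigcup_(m in [set: int]) (tpow tau tauinv m @` A).

Definition rRpre (h : R -> T) (B : set R) : set T :=
  [set x | exists y, B y /\
     (x = h y \/ (~ range h x /\
        closure (connected_component (~` range h) x) (h y)))].

Definition TR (h : R -> T) (F : T -> T) : set T :=
  closure (\bigcup_(n in [set: nat]) (iter n F @` range h)).

Definition Xset (h : R -> T) (F : T -> T) : set T :=
  closure (~` TR h F) `&` rRpre h `[0, 1[.

(* Sun-like: the branches X^i (i : Lambda) are the arcs gam i ([0,1]),
   ordered by the parameter, with min X^i = gam i 0. *)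
Definition sun_like (h : R -> T) (F : T -> T) (Lambda : finType)
    (gam : Lambda -> R -> T) : Prop :=
  [/\ (forall i, homeo_onto_image `[0, 1] (gam i)),
      (forall i j, i <> j -> gam i @` `[0, 1] `&` gam j @` `[0, 1] = set0),
      (forall i, gam i @` `[0, 1] `&` TR h F = [set gam i 0]) &
      (~` TR h F) `&` rRpre h `[0, 1[ =
         \bigcup_(i in [set: Lambda]) (gam i @` `]0, 1])].

Definition piece (Lambda P : finType) (gam : Lambda -> R -> T)
    (br : P -> Lambda) (a b : P -> R) (A : P) : set T :=
  gam (br A) @` `[a A, b A].

Definition basic_partition (h : R -> T) (tau tauinv F : T -> T)
    (Lambda : finType) (gam : Lambda -> R -> T) (P : finType)
    (br : P -> Lambda) (a b : P -> R) (lab : P -> Lambda) (per : P -> int) :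
    Prop :=
  let pc := piece gam br a b in
  [/\ (forall A, 0 <= a A /\ a A <= b A /\ b A <= 1),
      (forall A B, A <> B -> pc A `&` pc B = set0),
      (forall A, F @` pc A `<=`
          (tpow tau tauinv (per A) @` (gam (lab A) @` `[0, 1])) `|` (TR h F)°),
      (forall A, F (gam (br A) (a A)) = tpow tau tauinv (per A) (gam (lab A) 0)) &
      F @` (Xset h F `\` \bigcup_(A in [set: P]) pc A)
        `&` transZ tau tauinv (Xset h F) = set0].

Section CoveringGraph.
Variables (h : R -> T) (tau tauinv F : T -> T) (Lambda : finType)
  (gam : Lambda -> R -> T) (P : finType) (br : P -> Lambda) (a b : P -> R).

Let pc := piece gam br a b.

Definition bracket (w : seq P) : set T :=
  iter (size w).-1 F @`
    [set x | forall i (Hi : (i < size w)%N),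
       transZ tau tauinv (pc (tnth (in_tuple w) (Ordinal Hi))) (iter i F x)]
  `&` Xset h F.

Definition wsim (w v : seq P) : Prop :=
  exists (u u' s : seq P) (A : P),
    [/\ w = rcons u A ++ s, v = rcons u' A ++ s,
        bracket (rcons u A) = pc A & bracket (rcons u' A) = pc A].

Definition wclass (w : seq P) : set (seq P) := [set v | wsim w v].

Definition word_height (w : seq P) (H : nat) : Prop :=
  exists i, [/\ (i < size w)%N, H = ((size w).-1 - i)%N, wsim w (drop i w) &
     forall j, (i < j < size w)%N -> ~ wsim w (drop j w)].

Definition vertex (V : set (seq P)) : Prop :=
  exists w, w <> [::] /\ bracket w !=set0 /\ V = wclass w.

Definition arrow (V W : set (seq P)) : Prop :=
  vertex V /\ vertex W /\
  exists w A, w <> [::] /\ V = wclass w /\ W = wclass (rcons w A).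

Definition vheight (V : set (seq P)) (H : nat) : Prop :=
  exists w, V = wclass w /\ word_height w H.

Definition basis_vertex (V : set (seq P)) : Prop :=
  vertex V /\ exists A, V = wclass [:: A].

End CoveringGraph.
End LiftedGraphs.

(* Main.v *)
Require Import Defs.
From HB Require Import structures.
From mathcomp Require Import all_boot all_order all_algebra.
From mathcomp Require Import all_classical all_reals all_analysis.
From mathcomp Require Import zify ring lra.
Import Order.TTheory GRing.Theory Num.Theory.
Import numFieldNormedType.Exports.
Local Open Scope classical_set_scope.
Local Open Scope ring_scope.
Set Implicit Arguments. Unset Strict Implicit. Unset Printing Implicit Defensive.

Section Tpow.
Variables (T : topologicalType) (tau tauinv : T -> T).
Hypothesis tK : cancel tau tauinv.
Hypothesis tiK : cancel tauinv tau.

Local Notation tp := (tpow tau tauinv).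

Lemma tpowS (k : int) x : tp (k + 1) x = tau (tp k x).
Proof.
case: k => n.
  by rewrite -[1]/(Posz 1) -PoszD addn1.
case: n => [|n]; first by rewrite /= tiK.
have -> : Negz n.+1 + 1 = Negz n by rewrite !NegzE; lia.
by rewrite /= tiK.
Qed.

Lemma tpowP (k : int) x : tp (k - 1) x = tauinv (tp k x).
Proof.
by rewrite -[in RHS](subrK 1 k) tpowS tK.
Qed.

Lemma tpow0 x : tp 0 x = x. Proof. by []. Qed.

Lemma tpowD (m k : int) x : tp (m + k) x = tp m (tp k x).
Proof.
elim/int_ind: m => [|n IH|n IH]; first by rewrite add0r.
  have -> : (n.+1)%N%:Z = n%:Z + 1 by rewrite -addn1 PoszD.
  by rewrite addrAC !tpowS IH.
have -> : - (n.+1)%N%:Z = - n%:Z - 1 by rewrite -addn1 PoszD opprD.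
by rewrite addrAC !tpowP IH.
Qed.

Lemma tpowK (m : int) x : tp (- m) (tp m x) = x.
Proof. by rewrite -tpowD addNr. Qed.
Lemma tpowKV (m : int) x : tp m (tp (- m) x) = x.
Proof. by rewrite -tpowD addrN. Qed.
End Tpow.

Lemma image_closure (S U : topologicalType) (g : S -> U) (A : set S) :
  continuous g -> g @` closure A `<=` closure (g @` A).
Proof.
move=> cg _ [x clx <-] B nB.
have : nbhs x (g @^-1` B) by exact: cg.
move=> /clx [z [Az Bz]]; exists (g z); split => //; exists z.
Qed.

Unset Implicit Arguments.
Section Main.
Variables (R : realType) (T : topologicalType)
  (h : R -> T) (tau tauinv : T -> T) (F : T -> T)
  (Lambda : finType) (gam : Lambda -> R -> T)
  (P : finType) (br : P -> Lambda) (a b : P -> R)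
  (lab : P -> Lambda) (per : P -> int).
Hypothesis HL : lifted_graph h tau tauinv.
Hypothesis HF : continuous F.
Hypothesis Hcomm : forall x, F (tau x) = tau (F x).
Hypothesis HS : sun_like h F gam.
Hypothesis HB : basic_partition h tau tauinv F gam br a b lab per.

Local Notation tp := (tpow tau tauinv).
Local Notation TRs := (TR h F).
Local Notation X := (Xset h F).
Local Notation pc := (piece gam br a b).
Local Notation brk := (bracket h tau tauinv F gam br a b).

Lemma tK : cancel tau tauinv. Proof. by case: HL => _ [] _ _ ? _. Qed.
Lemma tiK : cancel tauinv tau. Proof. by case: HL => _ [] _ _ _ ?. Qed.
Lemma ctau : continuous tau. Proof. by case: HL => _ [] ? _ _ _. Qed.
Lemma ctauinv : continuous tauinv. Proof. by case: HL => _ [] _ ? _ _. Qed.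
Lemma htau x : tau (h x) = h (x + 1). Proof. by case: HL. Qed.
Lemma htauinv x : tauinv (h x) = h (x - 1).
Proof. by rewrite -[in LHS](subrK 1 x) -htau tK. Qed.

Lemma tpD m k x : tp (m + k) x = tp m (tp k x). Proof. exact: (@tpowD T tau tauinv tK tiK). Qed.
Lemma tpK m x : tp (- m) (tp m x) = x. Proof. exact: (@tpowK T tau tauinv tK tiK). Qed.
Lemma tpKV m x : tp m (tp (- m) x) = x. Proof. exact: (@tpowKV T tau tauinv tK tiK). Qed.

Lemma Fcommi x : F (tauinv x) = tauinv (F x).
Proof. by rewrite -[in RHS](tiK x) Hcomm tK. Qed.

Lemma Ftp m x : F (tp m x) = tp m (F x).
Proof.
have H1 k y : F (iter k tau y) = iter k tau (F y).
  by elim: k => //= k IH; rewrite Hcomm IH.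
have H2 k y : F (iter k tauinv y) = iter k tauinv (F y).
  by elim: k => //= k IH; rewrite Fcommi IH.
by case: m => n; [exact: H1|exact: H2].
Qed.

Lemma iterFtp m n x : iter n F (tp m x) = tp m (iter n F x).
Proof. by elim: n => //= n ->; rewrite Ftp. Qed.

Lemma ctp m : continuous (tp m).
Proof.
have H1 k : continuous (iter k tau).
  elim: k => [|n IH] /=; first by move=> x; exact: cvg_id.
  by move=> x; apply: continuous_comp; [exact: IH|exact: ctau].
have H2 k : continuous (iter k tauinv).
  elim: k => [|n IH] /=; first by move=> x; exact: cvg_id.
  by move=> x; apply: continuous_comp; [exact: IH|exact: ctauinv].
by case: m => n; [exact: H1|exact: H2].
Qed.

Lemma htp m y : tp m (h y) = h (y + m%:~R).
Proof.
elim/int_ind: m => [|n IH|n IH]; first by rewrite addr0.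
  have -> : (n.+1)%N%:Z = n%:Z + 1 by rewrite -addn1 PoszD.
  by rewrite (@tpowS T tau tauinv tiK) IH htau rmorphD /= addrA.
have -> : - (n.+1)%N%:Z = - n%:Z - 1 by rewrite -addn1 PoszD opprD.
by rewrite (@tpowP T tau tauinv tK tiK) IH htauinv rmorphB /= addrA.
Qed.

Lemma range_TR : range h `<=` TRs.
Proof.
move=> x rx; apply: subset_closure; by exists 0%N => //; exists x.
Qed.

Lemma TR_tp m x : TRs x -> TRs (tp m x).
Proof.
move=> TRx.
have sub : tp m @` (\bigcup_(n in [set: nat]) (iter n F @` range h)) `<=`
           \bigcup_(n in [set: nat]) (iter n F @` range h).
  move=> _ [_ [n _ [_ [y _ <-] <-]] <-]; exists n => //.
  by exists (h (y + m%:~R)); [exists (y + m%:~R)|rewrite -htp iterFtp].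
apply: (closureS sub); apply: (image_closure (@ctp m)); by exists x.
Qed.

Lemma TRi_tp m x : TRs° x -> TRs° (tp m x).
Proof.
rewrite /interior /= => nx.
have c : {for tp m x, continuous (tp (- m))} by exact: ctp.
have : nbhs (tp m x) (tp (- m) @^-1` TRs).
  by apply: c; rewrite tpK.
apply: filterS => y /= Ty; rewrite -(tpKV m y); exact: TR_tp.
Qed.


Lemma gam_hom i : homeo_onto_image `[0, 1] (gam i). Proof. by case: HS. Qed.
Lemma gam_inj i : {in `[0, 1]%classic &, injective (gam i)}.
Proof. by case: (gam_hom i). Qed.
Lemma gam_cont i : {within `[0, 1], continuous (gam i)}.
Proof. by case: (gam_hom i). Qed.
Lemma gam_open i (U : set R) : open U ->
  exists V : set T, open V /\ gam i @` (U `&` `[0, 1]) = V `&` (gam i @` `[0, 1]).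
Proof. by case: (gam_hom i) => _ _; apply. Qed.

Lemma itv01 (t : R) : `[0, 1]%classic t <-> 0 <= t <= 1.
Proof. by rewrite /= in_itv. Qed.

Lemma gam_notTR i t : 0 < t <= 1 -> ~ TRs (gam i t).
Proof.
move=> /andP [t0 t1] Tt.
case: HS => _ _ HTR _.
have : (gam i @` `[0, 1] `&` TRs) (gam i t).
  by split => //; exists t => //; apply/itv01; rewrite t1 ltW.
rewrite HTR /= => /gam_inj.
have h0 : (0 : R) \in `[0, 1]%classic by rewrite inE; apply/itv01; rewrite lexx ler01.
have h1 : t \in `[0, 1]%classic by rewrite inE; apply/itv01; rewrite t1 ltW.
by move=> /(_ h1 h0) t0'; move: t0; rewrite t0' ltxx.
Qed.

Lemma gam_rR i t : 0 < t <= 1 -> ~ TRs (gam i t) /\ rRpre h `[0, 1[ (gam i t).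
Proof.
move=> t01; case: HS => _ _ _ Heq.
have : (\bigcup_(i in [set: Lambda]) (gam i @` `]0, 1])) (gam i t).
  by exists i => //; exists t => //=; rewrite in_itv.
by rewrite -Heq.
Qed.

Lemma gam0_clim i : closure (gam i @` `]0, 1]) (gam i 0).
Proof.
move=> B nB.
have c := gam_cont i.
have c0 : gam i @ within `[0, 1] (nbhs (0:R)) --> gam i 0.
  by move/subspace_continuousP : c; apply; apply/itv01; rewrite lexx ler01.
have := c0 _ nB; rewrite /= nbhs_simpl /within /=.
move=> /nbhs_ballP [e /= e0 be].
pose t := Num.min (e / 2) 1.
have t0 : 0 < t by rewrite lt_min ltr01 andbT divr_gt0.
have t1 : t <= 1 by rewrite ge_min lexx orbT.
exists (gam i t); split; last first.
  apply: be; last by apply/itv01; rewrite t1 ltW.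
  rewrite /ball /= sub0r normrN gtr0_norm //.
  rewrite gt_min; apply/orP; left; lra.
by exists t => //=; rewrite in_itv /= t0 t1.
Qed.

Lemma gam0_cl i : closure (~` TRs) (gam i 0).
Proof.
apply: (closureS _ (gam0_clim i)) => _ [t t01 <-].
by apply: gam_notTR; move: t01; rewrite /= in_itv.
Qed.

Lemma conn_oc : connected (`]0, 1] : set R).
Proof.
apply/connected_intervalP => x y; rewrite /= !in_itv /= => /andP [x0 x1] /andP [y0 y1] z /andP [xz zy].
apply/andP; split; [exact: lt_le_trans xz|exact: le_trans y1].
Qed.

Lemma conn_cc (u v : R) : connected (`[u, v] : set R).
Proof.
apply/connected_intervalP => x y; rewrite /= !in_itv /= => /andP [x0 x1] /andP [y0 y1] z /andP [xz zy].
apply/andP; split; [exact: le_trans xz|exact: le_trans y1].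
Qed.

Lemma gam_conn i (I : set R) : I `<=` `[0, 1] -> connected I -> connected (gam i @` I).
Proof.
move=> sI cI; apply: connected_continuous_connected => //.
exact: continuous_subspaceW sI (gam_cont i).
Qed.
Lemma gam0_notint i : ~ TRs° (gam i 0).
Proof. by move: (gam0_cl i); rewrite closure_setC. Qed.

Lemma notrange_notTR x : ~ TRs x -> ~ range h x.
Proof. by move=> nT rx; apply: nT; exact: range_TR. Qed.

Lemma gam_X i t : 0 <= t <= 1 -> X (gam i t).
Proof.
move=> /andP [t0 t1].
have [tz|tp0] := eqVneq t 0; last first.
  have t01 : 0 < t <= 1 by rewrite t1 lt_def tp0 t0.
  have [nT rR] := gam_rR i t t01.
  by split => //; apply: subset_closure.
subst t; split; first exact: gam0_cl.
have g1 : 0 < (1:R) <= 1 by rewrite ltr01 lexx.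
have [nT [y [y01 [e|[_ cly]]]]] := gam_rR i 1 g1.
  by exfalso; apply: (notrange_notTR _ nT); rewrite e; exists y.
set C := connected_component (~` range h) (gam i 1).
have sC : gam i @` `]0, 1] `<=` C.
  apply: connected_component_max.
  - by exists 1 => //=; rewrite in_itv /= ltr01 lexx.
  - move=> _ [t t01 <-]; apply: notrange_notTR; apply: gam_notTR.
    by move: t01; rewrite /= in_itv.
  - apply: gam_conn conn_oc => s; rewrite /= !in_itv /= => /andP [s0 ->].
    by rewrite ltW.
have clC0 : closure C (gam i 0) by apply: (closureS sC); exact: gam0_clim.
exists y; split => //.
have [[z _ ez]|nr0] := pselect (range h (gam i 0)).
  left.
  case: HL => _ _ _ Hc _.
  have [_ [y0 Hy0]] := Hc (gam i 1) (notrange_notTR _ nT).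
  have e1 : (closure C `&` range h) (h y) by split => //; exists y.
  have e2 : (closure C `&` range h) (gam i 0) by split => //; exists z.
  move: e1 e2; rewrite /C Hy0 /= => -> ->. done.
right; split => //.
have sub : gam i @` `[0, 1] `<=` connected_component (~` range h) (gam i 0).
  apply: connected_component_max.
  - by exists 0 => //=; rewrite in_itv /= lexx ler01.
  - move=> _ [t t01 <-].
    have [->|tn0] := eqVneq t 0; first exact: nr0.
    apply: notrange_notTR; apply: gam_notTR.
    by move: t01; rewrite /= in_itv /= lt_def tn0 => /andP [-> ->].
  - by apply: gam_conn (conn_cc 0 1).
have c01 : connected_component (~` range h) (gam i 0) (gam i 1).
  by apply: sub; exists 1 => //=; rewrite in_itv /= ler01 lexx.
by rewrite (same_connected_component c01).
Qed.

Lemma h_inj : injective h.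
Proof.
case: HL => [[_ [_ hi _]]] _ _ _ _ x y e.
by apply: hi => //; rewrite inE.
Qed.

Lemma int01 (m : int) (y y' : R) : 0 <= y < 1 -> 0 <= y' < 1 ->
  y' = y + m%:~R -> m = 0.
Proof.
move=> /andP [y0 y1] /andP [y'0 y'1] e.
have H1 : m%:~R < (1 : int)%:~R :> R by rewrite /=; lra.
have H2 : (-1 : int)%:~R < m%:~R :> R by rewrite /=; lra.
rewrite ltr_int in H1; rewrite ltr_int in H2; lia.
Qed.

Lemma range_tp m x : range h (tp m x) -> range h x.
Proof. by move=> [w _ e]; exists (w - m%:~R) => //; rewrite -[x](tpK m) -e htp rmorphN. Qed.

Lemma comp_tp m z : ~ range h z ->
  tp m @` connected_component (~` range h) z `<=`
  connected_component (~` range h) (tp m z).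
Proof.
move=> nz; apply: connected_component_max.
- by exists z => //; apply: connected_component_refl.
- move=> _ [w cw <-] /range_tp; exact: (connected_component_sub cw).
- apply: connected_continuous_connected; first exact: component_connected.
  exact/continuous_subspaceT/ctp.
Qed.

Lemma X_tp_eq0 m z : X z -> X (tp m z) -> m = 0.
Proof.
move=> [_ [y [y01 hz]]] [_ [y' [y'01 hz']]].
move: y01 y'01; rewrite /= !in_itv /= => y01 y'01.
case: hz => [ez|[nz clz]].
  case: hz' => [e'|[nz' _]]; last by exfalso; apply: nz'; rewrite ez htp; eexists.
  apply: (int01 m y y' y01 y'01); apply: h_inj; by rewrite -e' ez htp.
case: hz' => [e'|[nz' clz']].
  by exfalso; apply: nz; apply: (range_tp m); rewrite e'; eexists.
case: HL => _ _ _ Hc _.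
have [_ [y0 Hy0]] := Hc (tp m z) nz'.
have cl2 : closure (connected_component (~` range h) (tp m z)) (h (y + m%:~R)).
  apply: (closureS (comp_tp m z nz)); apply: (image_closure (@ctp m)).
  by exists (h y) => //; rewrite htp.
have e1 : (closure (connected_component (~` range h) (tp m z)) `&` range h) (h y')
  by split => //; exists y'.
have e2 : (closure (connected_component (~` range h) (tp m z)) `&` range h) (h (y + m%:~R))
  by split => //; eexists.
move: e1 e2; rewrite Hy0 /= => e1 e2.
have e : y' = y + m%:~R by apply: h_inj; rewrite e1 e2.
exact: (int01 m y y' y01 y'01).
Qed.

Lemma pcab A : 0 <= a A /\ a A <= b A /\ b A <= 1.
Proof. by case: HB => H _ _ _ _; apply: H. Qed.

Lemma pc_X A : pc A `<=` X.
Proof.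
move=> _ [t tab <-]; apply: gam_X.
have [a0 [ab b1]] := pcab A.
move: tab; rewrite /= in_itv /= => /andP [at' tb].
apply/andP; split; [exact: le_trans at'|exact: le_trans b1].
Qed.

Lemma transZ_self S y : S y -> transZ tau tauinv S y.
Proof. by move=> Sy; exists 0 => //; exists y. Qed.

Lemma transZ_tp S m y : transZ tau tauinv S y -> transZ tau tauinv S (tp m y).
Proof.
by move=> [k _ [z Sz <-]]; exists (m + k) => //; exists z => //; rewrite tpD.
Qed.

Lemma transZ_tpE S m y : transZ tau tauinv S (tp m y) = transZ tau tauinv S y.
Proof.
apply/propext; split; last exact: transZ_tp.
by move=> /(transZ_tp S (- m)); rewrite tpK.
Qed.

Lemma transZ_in S y : S `<=` X -> transZ tau tauinv S y -> X y -> S y.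
Proof.
move=> SX [k _ [z Sz ez]] Xy.
have k0 : k = 0 by apply: (X_tp_eq0 k z); [exact: SX|rewrite ez].
by move: ez; rewrite k0 => <-.
Qed.

Definition SS (d : P) (w : seq P) : set T :=
  [set x | forall i, (i < size w)%N -> transZ tau tauinv (pc (nth d w i)) (iter i F x)].

Lemma brkE d w : brk w = iter (size w).-1 F @` SS d w `&` X.
Proof.
rewrite /bracket /SS; congr (_ `&` _); congr (_ @` _).
apply/funext => x; apply/propext; split.
  by move=> H i Hi; have := H i Hi; rewrite (tnth_nth d).
by move=> H i Hi; rewrite (tnth_nth d); apply: H.
Qed.

Lemma SS_tp d w m x : SS d w x -> SS d w (tp m x).
Proof. by move=> H i Hi; rewrite iterFtp; apply: transZ_tp; apply: H. Qed.

Lemma brk1 A : brk [:: A] = pc A.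
Proof.
rewrite (brkE A) /=; apply/seteqP; split.
  move=> _ [[x Sx <-] Xx] /=.
  by apply: transZ_in; [exact: pc_X| exact: (Sx 0%N isT) | exact: Xx].
move=> x pcx; split; last exact: (pc_X A x pcx).
by exists x => //; move=> [|i] //= _; exact: transZ_self.
Qed.

Definition Phi (J : set T) (B : P) : set T :=
  F @` transZ tau tauinv J `&` transZ tau tauinv (pc B) `&` X.

Lemma brk_rcons p B : p <> [::] -> brk (rcons p B) = Phi (brk p) B.
Proof.
move=> pn; rewrite /Phi (brkE B) (brkE B) size_rcons /=.
have [n sp] : exists n, size p = n.+1 by case: p pn => // c p' _; exists (size p').
rewrite sp /=.
have SSr x : SS B (rcons p B) x <->
    SS B p x /\ transZ tau tauinv (pc B) (iter n.+1 F x).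
  split.
    move=> H; split.
      move=> i Hi; have := H i; rewrite size_rcons nth_rcons Hi; apply; lia.
    by have := H n.+1; rewrite size_rcons nth_rcons sp ltnn eqxx; apply.
  move=> [H1 H2] i; rewrite size_rcons nth_rcons ltnS leq_eqVlt.
  case/orP => [/eqP ->|Hi]; first by rewrite sp ltnn eqxx.
  by rewrite Hi; apply: H1.
apply/seteqP; split.
  move=> _ [[x /SSr [Sx Tx] <-] Xy]; split => //; split => //.
  rewrite iterS; exists (iter n F x) => //.
  have := Sx n; rewrite sp ltnSn => /(_ isT) [k _ [z pz ez]].
  exists k => //; exists z => //; split; last exact: (pc_X _ _ pz).
  exists (tp (- k) x); first exact: SS_tp.
  by rewrite iterFtp -ez tpK.
move=> y [[[u [k _ [z [[x Sx ex] Xz] ez]] <-] Ty] Xy]; split => //.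
exists (tp k x); last by rewrite iterS iterFtp ex ez.
apply/SSr; split; first exact: SS_tp.
by rewrite iterS iterFtp ex ez.
Qed.

Lemma brk_cat p q t : p <> [::] -> q <> [::] -> brk p = brk q ->
  brk (p ++ t) = brk (q ++ t).
Proof.
move=> pn qn e; elim/last_ind: t => [|t B IH]; first by rewrite !cats0.
have pt : p ++ t <> [::] by case: (p) pn.
have qt : q ++ t <> [::] by case: (q) qn.
by rewrite -!rcons_cat (brk_rcons _ _ pt) (brk_rcons _ _ qt) IH.
Qed.

Lemma arc_TR i : gam i @` `[0, 1] `&` TRs = [set gam i 0].
Proof. by case: HS. Qed.

Lemma arc_disj i j : i <> j -> gam i @` `[0, 1] `&` gam j @` `[0, 1] = set0.
Proof. by case: HS => _ H _ _; apply: H. Qed.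

Lemma gam0_TR i : TRs (gam i 0).
Proof. by have : [set gam i 0] (gam i 0) by []; rewrite -arc_TR => -[]. Qed.

Lemma gam_injE i s t : 0 <= s <= 1 -> 0 <= t <= 1 -> gam i s = gam i t -> s = t.
Proof.
move=> s01 t01; apply: gam_inj; rewrite inE; exact/itv01.
Qed.

Lemma Q_conv l (Q : set T) : connected Q ->
  Q `<=` gam l @` `[0, 1] `|` TRs° ->
  is_interval [set t | 0 <= t <= 1 /\ Q (gam l t)].
Proof.
move=> cQ sQ; apply/is_intervalPlt => t1 t2 [/andP [t10 t11] Q1]
  [/andP [t20 t21] Q2] t /andP [t1t tt2].
have t01 : 0 <= t <= 1 by apply/andP; split; lra.
split; first exact: t01.
apply: contrapT => nQ.
have [V1 [oV1 eV1]] := gam_open l [set x | t < x] (@open_gt _ t).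
have [V2 [oV2 eV2]] := gam_open l [set x | x < t] (@open_lt _ t).
pose B := Q `&` (V1 `&` ~` TRs).
have key x : Q x -> (V1 `&` ~` TRs) x <-> (~` V2 `&` ~` TRs°) x.
  move=> Qx; have [iT|niT] := pselect (TRs° x).
    split; first by move=> [_ /(_ (interior_subset iT))].
    by move=> [_ /(_ iT)].
  have [[s /itv01 s01 es]|//] := sQ x Qx.
  have [sl|st|se] := ltgtP s t.
  - split.
      move=> [V1x _]; have : (V1 `&` gam l @` `[0, 1]) x by split => //; exists s => //; exact/itv01.
      rewrite -eV1 => -[s' [/= s't s'01] es'];       have := gam_injE l s' s; rewrite es' -es => /(_ _ _ erefl); move: s'01; rewrite /= in_itv /= => s'01 /(_ s'01 s01) e.
      lra.
    move=> [nV2 _]; exfalso; apply: nV2.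
    have : (gam l @` ([set x | x < t] `&` `[0, 1])) x.
      by exists s => //; split => //; apply/itv01.
    by rewrite eV2 => -[].
  - split; last first.
      move=> [_ nI]; split.
        have : (gam l @` ([set x | t < x] `&` `[0, 1])) x.
          by exists s => //; split => //; apply/itv01.
        by rewrite eV1 => -[].
      rewrite -es; apply: gam_notTR; move: s01 => /andP [_ ->]; rewrite andbT; lra.
    move=> [_ nT]; split; last by move=> /interior_subset.
    move=> V2x; have : (V2 `&` gam l @` `[0, 1]) x by split => //; exists s => //; exact/itv01.
    rewrite -eV2 => -[s' [/= s't s'01] es'];     have := gam_injE l s' s; rewrite es' -es => /(_ _ _ erefl); move: s'01; rewrite /= in_itv /= => s'01 /(_ s'01 s01) e.
    lra.
  - by exfalso; apply: nQ; rewrite -se es.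
have : B = Q.
  apply: cQ.
  - exists (gam l t2); split => //; split.
      have : (gam l @` ([set x | t < x] `&` `[0, 1])) (gam l t2).
        by exists t2 => //; split; rewrite /=; [lra|apply/itv01; apply/andP].
      by rewrite eV1 => -[].
    apply: gam_notTR; apply/andP; split => //; lra.
  - by exists (V1 `&` ~` TRs) => //; apply: openI => //; apply: closed_openC; exact: closed_closure.
  - exists (~` V2 `&` ~` TRs°).
      by apply: closedI; apply: open_closedC => //; exact: open_interior.
    rewrite /B; apply/seteqP; split => x [Qx Hx]; split => //; by apply/(key x Qx).
move=> eBQ.
have : B (gam l t1) by rewrite eBQ.
move=> [_ [V1x _]].
have : (V1 `&` gam l @` `[0, 1]) (gam l t1) by split => //; exists t1 => //; exact/itv01/andP.
rewrite -eV1 => -[s' [/= s't s'01] es'].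
have := gam_injE l s' t1 _ _ es'; move: s'01; rewrite /= in_itv /= => s'01.
move=> /(_ s'01 (introT andP (conj t10 t11))) e; lra.
Qed.

Definition good (J : set T) (A : P) := exists I : set R,
  [/\ is_interval I, I (a A), I `<=` `[a A, b A] & J = gam (br A) @` I].

Lemma Himg A : F @` pc A `<=`
  (tp (per A) @` (gam (lab A) @` `[0, 1])) `|` TRs°.
Proof. by case: HB => _ _ H _ _; apply: H. Qed.

Lemma Hmin A : F (gam (br A) (a A)) = tp (per A) (gam (lab A) 0).
Proof. by case: HB => _ _ _ H _; apply: H. Qed.

Lemma pc_disj A B : A <> B -> pc A `&` pc B = set0.
Proof. by case: HB => _ H _ _ _; apply: H. Qed.

Lemma ab01 B t : `[a B, b B]%classic t -> 0 <= t <= 1.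
Proof.
have [a0 [ab b1]] := pcab B.
rewrite /= in_itv /= => /andP [at' tb]; apply/andP; split; lra.
Qed.

Lemma step J A : good J A -> exists S : set R,
  [/\ is_interval S, S 0, (forall t, S t -> 0 <= t <= 1) &
    forall B, Phi J B = if br B == lab A then gam (br B) @` (S `&` `[a B, b B])
                        else set0].
Proof.
move=> [I [iI Ia sI ->]].
set al := br A; set l := lab A; set p := per A.
pose f := fun t => tp (- p) (F (gam al t)).
pose Q := f @` I.
have sI01 : I `<=` `[0, 1] by move=> t /sI /ab01 /itv01.
have cQ : connected Q.
  apply: connected_continuous_connected; first exact/connected_intervalP.
  move=> x; apply: continuous_comp; last exact: ctp.
  apply: continuous_comp; last exact: HF.
  exact: (continuous_subspaceW sI01 (gam_cont al) (x:=x)).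
have Fpc r : I r -> ((tp p @` (gam l @` `[0, 1])) `|` TRs°) (F (gam al r)).
  by move=> Ir; apply: Himg; exists (gam al r) => //; exists r => //; apply: sI.
have sQ : Q `<=` gam l @` `[0, 1] `|` TRs°.
  move=> _ [r Ir <-]; case: (Fpc r Ir) => [[g ag eg]|iT].
    by left; rewrite /f -eg tpK.
  by right; apply: TRi_tp.
have Q0 : Q (gam l 0) by exists (a A) => //; rewrite /f Hmin tpK.
exists [set t | 0 <= t <= 1 /\ Q (gam l t)]; split.
- exact: Q_conv.
- by split => //; rewrite lexx ler01.
- by move=> t [].
move=> B; apply/seteqP; split.
  move=> y [[[u [k _ [j [r Ir ej] eu]] ey0] Ty] Xy].
  have pcBy : pc B y := transZ_in (pc B) y (pc_X B) Ty Xy.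
  case: pcBy => t tab ey.
  have t01 := ab01 B t tab.
  case: (Fpc r Ir) => [[g [s s01 eg] eF]|iT]; last first.
    exfalso; apply: (gam0_notint (br B)).
    have iy : TRs° y by rewrite -ey0 -eu -ej Ftp; apply: TRi_tp.
    have : (gam (br B) @` `[0, 1] `&` TRs) y.
      by split; [exists t => //; exact/itv01|exact: interior_subset].
    by rewrite arc_TR /= => e; rewrite -e.
  have Xg : X g by rewrite -eg; apply: gam_X; exact/itv01.
  have eyg : y = tp (k + p) g by rewrite -ey0 -eu -ej Ftp tpD eF.
  have kp : k + p = 0 by apply: (X_tp_eq0 (k + p) g Xg); rewrite -eyg.
  move: eyg; rewrite kp /= => eyg.
  case: eqP => [eB|nB].
    exists t => //; split => //; split => //.
    by exists r => //; rewrite /f -eF tpK -eB ey eyg.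
  apply: nB; apply: contrapT => nB.
  have : (gam (br B) @` `[0, 1] `&` gam l @` `[0, 1]) y.
    split; first by exists t => //; exact/itv01.
    by rewrite eyg -eg; exists s.
  by rewrite arc_disj.
case: eqP => [eB|_]; last by [].
move=> _ [t [[t01 [r Ir fr]] tab] <-].
split; [split|].
- exists (tp (- p) (gam al r)).
    by exists (- p) => //; exists (gam al r) => //; exists r.
  by rewrite Ftp eB.
- by apply: transZ_self; exists t.
- by apply: (pc_X B); exists t.
Qed.

Lemma Phi0 B : Phi set0 B = set0.
Proof.
apply/seteqP; split; last by [].
move=> y H; exfalso; move: H => [[[u [k k1 [j Jj e1]] e2] e3] e4]; case: Jj.
Qed.

Lemma good_next J A B : good J A -> Phi J B = set0 \/ good (Phi J B) B.
Proof.
move=> gJ; have [S [iS S0 S01 HP]] := step J A gJ.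
rewrite HP; case: eqP => [eB|_]; last by left.
have [[t [St tab]]|ne] := pselect (exists t, S t /\ `[a B, b B]%classic t); last first.
  left; apply/seteqP; split; last by [].
  move=> y [t [St tab] _]; exfalso; apply: ne; by exists t.
right; exists (S `&` `[a B, b B]); split; last by [].
- move=> x y [Sx xab] [Sy yab] z /andP [xz zy]; split.
    exact: (iS x y Sx Sy z (introT andP (conj xz zy))).
  move: xab yab; rewrite /= !in_itv /= => /andP [ax _] /andP [_ yb].
  apply/andP; split; [exact: le_trans xz|exact: le_trans yb].
- have [a0 [ab b1]] := pcab B.
  have aS : S (a B).
    apply: (iS 0 t S0 St).
    move: tab; rewrite /= in_itv /= => /andP [at' _]; by rewrite a0 at'.
  by split => //; rewrite /= in_itv /= lexx ab.
- by move=> x [].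
Qed.

Lemma unique_partial J A B1 B2 : good J A ->
  Phi J B1 !=set0 -> Phi J B1 <> pc B1 ->
  Phi J B2 !=set0 -> Phi J B2 <> pc B2 -> B1 = B2.
Proof.
move=> gJ n1 p1 n2 p2; have [S [iS S0 S01 HP]] := step J A gJ.
move: n1 p1 n2 p2; rewrite !HP.
case: eqP => [e1|_]; last by case.
case: eqP => [e2|_]; last by move=> _ _; case.
move=> [_ [s1 [S1 s1ab] _]] p1 [_ [s2 [S2 s2ab] _]] p2.
have nt (B : P) : gam (br B) @` (S `&` `[a B, b B]) <> pc B ->
    exists t, `[a B, b B]%classic t /\ ~ S t.
  move=> pB; apply: contrapT => nE; apply: pB.
  rewrite /piece; congr (_ @` _); apply/seteqP; split => t; first by case.
  move=> tab; split => //; apply: contrapT => nS; apply: nE; by exists t.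
have [t1 [t1ab nS1]] := nt B1 p1.
have [t2 [t2ab nS2]] := nt B2 p2.
apply: contrapT => nB.
have dj := pc_disj B1 B2 nB.
move: s1ab s2ab t1ab t2ab; rewrite /= !in_itv /= => /andP [as1 s1b] /andP [as2 s2b]
  /andP [at1 t1b] /andP [at2 t2b].
have [t10 _] := andP (S01 _ S1).
have conv x y z : S x -> S y -> x <= z <= y -> S z by move=> Sx Sy; apply: iS.
have [lt12|lt21] : b B1 < a B2 \/ b B2 < a B1.
  have [l1|l1] := ltP (b B1) (a B2); first by left.
  have [l2|l2] := ltP (b B2) (a B1); first by right.
  exfalso.
  have [m [m1 m2]] : exists m, (a B1 <= m <= b B1) /\ (a B2 <= m <= b B2).
    have [_ [ab1 _]] := pcab B1; have [_ [ab2 _]] := pcab B2.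
    have [l3|l3] := leP (a B1) (a B2).
      by exists (a B2); split; apply/andP; split; lra.
    by exists (a B1); split; apply/andP; split; lra.
  have : (pc B1 `&` pc B2) (gam (br B1) m).
    split; first by exists m => //; rewrite /= in_itv.
    by exists m; [rewrite /= in_itv|rewrite e1 e2].
  by rewrite dj.
- apply: nS1; apply: (conv 0 s2) => //; apply/andP; split; first by rewrite (le_trans (le_trans (proj1 (pcab B1)) at1)).
  lra.
- apply: nS2; apply: (conv 0 s1) => //; apply/andP; split; first by rewrite (le_trans (le_trans (proj1 (pcab B2)) at2)).
  lra.
Qed.

Lemma good_brk p B : brk (rcons p B) = set0 \/ good (brk (rcons p B)) B.
Proof.
elim/last_ind: p B => [|p A IH] B.
  right; rewrite /= brk1; exists `[a B, b B]%classic; split => //.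
  - exact/connected_intervalP/conn_cc.
  - have [_ [ab _]] := pcab B; by rewrite /= in_itv /= lexx ab.
rewrite brk_rcons; last by case: (p).
case: (IH A) => [->|gA]; first by left; exact: Phi0.
exact: good_next gA.
Qed.

Local Notation wsimL := (wsim h tau tauinv F gam br a b).
Local Notation wclassL := (wclass h tau tauinv F gam br a b).

Definition gpos (d : P) (w : seq P) (k : nat) :=
  (k < size w)%N /\ brk (take k.+1 w) = pc (nth d w k).

Lemma dec_word d (u : seq P) A s :
  [/\ take (size u).+1 (u ++ A :: s) = rcons u A,
      nth d (u ++ A :: s) (size u) = A,
      drop (size u) (u ++ A :: s) = A :: s &
      (size u < size (u ++ A :: s))%N].
Proof.
split.
- by rewrite take_cat ltnNge leqnSn /= subSnn /= take0 cats1.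
- by rewrite nth_cat ltnn subnn.
- exact: drop_size_cat.
- by rewrite size_cat /= addnS ltnS leq_addr.
Qed.

Lemma wsimP d w v : wsimL w v <->
  exists k k', [/\ gpos d w k, gpos d v k' & drop k w = drop k' v].
Proof.
split.
  move=> [u [u' [s [A [ew ev bu bu']]]]].
  rewrite -cats1 -catA /= in ew; rewrite -cats1 -catA /= in ev.
  have [t1 n1 d1 s1] := dec_word d u A s.
  have [t2 n2 d2 s2] := dec_word d u' A s.
  exists (size u), (size u'); rewrite ew ev; split.
  - by split => //; rewrite t1 n1.
  - by split => //; rewrite t2 n2.
  - by rewrite d1 d2.
move=> [k [k' [[kw bk] [kv bk'] e]]].
have enth : nth d v k' = nth d w k.
  by rewrite -[k']addn0 -[k]addn0 -!nth_drop e.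
have edrop : drop k'.+1 v = drop k.+1 w.
  by rewrite -[k'.+1]add1n -[k.+1]add1n -!drop_drop e.
exists (take k w), (take k' v), (drop k.+1 w), (nth d w k); split.
- by rewrite -take_nth // cat_take_drop.
- by rewrite -enth -edrop -take_nth // cat_take_drop.
- by rewrite -take_nth.
- by rewrite -enth -take_nth.
Qed.

Lemma gpos0 d w : w <> [::] -> gpos d w 0.
Proof. by case: w => // A s _; split => //=; rewrite take0 brk1. Qed.

Lemma wsim_refl w : w <> [::] -> wsimL w w.
Proof.
case: w => // A s _; exists [::], [::], s, A; split => //; exact: brk1.
Qed.

Lemma wsim_sym w v : wsimL w v -> wsimL v w.
Proof. by move=> [u [u' [s [A [ew ev bu bu']]]]]; exists u', u, s, A. Qed.

Lemma wsim_brk w v : wsimL w v -> brk w = brk v.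
Proof.
move=> [u [u' [s [A [-> -> bu bu']]]]].
apply: brk_cat; [by case: (u)|by case: (u')|by rewrite bu bu'].
Qed.

Lemma take_ne (w : seq P) k : (k < size w)%N -> take k.+1 w <> [::].
Proof. by case: w => //= A s _. Qed.

Lemma shift d w v p p' : gpos d w p -> gpos d v p' -> drop p w = drop p' v ->
  forall t, gpos d w (p + t) <-> gpos d v (p' + t).
Proof.
move=> [pw bp] [pv bp'] e t.
have sz : (size w - p = size v - p')%N by rewrite -!size_drop e.
have enth : nth d w (p + t) = nth d v (p' + t) by rewrite -!nth_drop e.
have edrop : drop p.+1 w = drop p'.+1 v.
  by rewrite -[p'.+1]add1n -[p.+1]add1n -!drop_drop e.
have etake : brk (take (p + t).+1 w) = brk (take (p' + t).+1 v).
  rewrite -!addSn !takeD edrop; apply: brk_cat; try exact: take_ne.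
  by rewrite bp bp' -[p]addn0 -[p']addn0 -!nth_drop e.
rewrite /gpos etake enth; split => -[H1 H2]; split => //; lia.
Qed.

Lemma wsim_trans w v z : wsimL w v -> wsimL v z -> wsimL w z.
Proof.
move=> H1 H2; have [u [u' [s [d _]]]] := H1.
move/(wsimP d): H1 => [k1 [k1' [g1 g1' e1]]].
move/(wsimP d): H2 => [k2 [k2' [g2 g2' e2]]].
apply/(wsimP d).
have [le|lt] := leqP k1' k2.
  exists (k1 + (k2 - k1'))%N, k2'; split => //.
  - by apply/(shift d w v k1 k1' g1 g1' e1); rewrite subnKC.
  - by rewrite addnC -drop_drop e1 drop_drop subnK.
exists k1, (k2' + (k1' - k2))%N; split => //.
- by apply/(shift d v z k2 k2' g2 g2' e2); rewrite subnKC // ltnW.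
- by rewrite e1 addnC -drop_drop -e2 drop_drop subnK // ltnW.
Qed.

Lemma wclass_eq w v : wsimL w v -> wclassL w = wclassL v.
Proof.
move=> wv; apply/funext => x; apply/propext; split => H.
  exact: (wsim_trans _ _ _ (wsim_sym _ _ wv) H).
exact: (wsim_trans _ _ _ wv H).
Qed.

Lemma height_kmax d w H : word_height h tau tauinv F gam br a b w H ->
  exists k, [/\ gpos d w k, H = ((size w).-1 - k)%N &
              forall j, (k < j)%N -> ~ gpos d w j].
Proof.
move=> [i [iw eH wi nj]].
have [k [k' [gk gk' e]]] := (iffLR (wsimP d w (drop i w)) wi).
have ek : k = (k' + i)%N.
  move: e; rewrite drop_drop => e.
  have := congr1 size e; rewrite !size_drop.
  case: gk => kw _; case: gk' => k'w _; move: k'w; rewrite size_drop => k'w; lia.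
have gposdrop j : gpos d w j -> wsimL w (drop j w).
  move=> gj; apply/(wsimP d); exists j, 0%N; split => //; last by rewrite drop0.
  apply: gpos0; case: gj => jw _ e0.
  have := size_drop j w; rewrite e0 /=; lia.
have ki : k = i.
  apply/eqP; rewrite eqn_leq; apply/andP; split; last by lia.
  rewrite leqNgt; apply/negP => ik; apply: (nj k); last exact: gposdrop.
  by case: gk => kw _; rewrite ik kw.
exists i; split => //; first by rewrite -ki.
move=> j ij gj; apply: (nj j); last exact: gposdrop.
by case: gj => jw _; rewrite ij jw.
Qed.

Lemma kmax_exists d w : w <> [::] ->
  exists k, gpos d w k /\ forall j, (k < j)%N -> ~ gpos d w j.
Proof.
move=> wn.
suff : forall n, exists k, gpos d w k /\ forall j, (k < j)%N -> (j < n)%N -> ~ gpos d w j.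
  move=> /(_ (size w)) [k [gk H]]; exists k; split => // j kj gj.
  by apply: (H j kj _ gj); case: gj.
elim => [|n [k [gk H]]]; first by exists 0%N; split => //; exact: gpos0.
have [gn|ngn] := pselect (gpos d w n).
  have [kn|nk] := ltnP k n.
    exists n; split => // j nj jn; lia.
  exists k; split => // j kj jn; apply: H => //; lia.
exists k; split => // j kj; rewrite ltnS leq_eqVlt => /orP [/eqP ->|jn] //.
exact: H.
Qed.

Lemma kmax_inv d w v k k' : wsimL w v ->
  gpos d w k -> (forall j, (k < j)%N -> ~ gpos d w j) ->
  gpos d v k' -> (forall j, (k' < j)%N -> ~ gpos d v j) ->
  ((size w).-1 - k = (size v).-1 - k')%N.
Proof.
move=> /(wsimP d) [p [p' [gp gp' e]]] gk mk gk' mk'.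
have sh := shift d w v p p' gp gp' e.
have pk : (p <= k)%N by rewrite leqNgt; apply/negP => /mk.
have pk' : (p' <= k')%N by rewrite leqNgt; apply/negP => /mk'.
have g1 : gpos d v (p' + (k - p))%N by apply/sh; rewrite subnKC.
have g2 : gpos d w (p + (k' - p'))%N by apply/sh; rewrite subnKC.
have l1 : (p' + (k - p) <= k')%N by rewrite leqNgt; apply/negP => /mk'.
have l2 : (p + (k' - p') <= k)%N by rewrite leqNgt; apply/negP => /mk.
have sz : (size w - p = size v - p')%N by rewrite -!size_drop e.
case: gp => pw _; case: gp' => pv _; case: gk => kw _; case: gk' => kv _.
lia.
Qed.

Lemma gpos_rcons d w A j : (j < size w)%N -> gpos d (rcons w A) j <-> gpos d w j.
Proof.
move=> jw; rewrite /gpos size_rcons nth_rcons jw -cats1 takel_cat //.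
split => -[_ ->]; split => //; lia.
Qed.

Lemma rcons_ne (w : seq P) A : rcons w A <> [::].
Proof. by case: w. Qed.

Lemma main_sec :
  (forall V W1 W2 : set (seq P),
     arrow h tau tauinv F gam br a b V W1 ->
     arrow h tau tauinv F gam br a b V W2 ->
     ~ basis_vertex h tau tauinv F gam br a b W1 ->
     ~ basis_vertex h tau tauinv F gam br a b W2 -> W1 = W2) /\
  (forall (V W : set (seq P)) (HV HW : nat),
     arrow h tau tauinv F gam br a b V W ->
     vheight h tau tauinv F gam br a b V HV ->
     vheight h tau tauinv F gam br a b W HW ->
     (0 < HW)%N -> HW = HV.+1).
Proof.
split.
  move=> V W1 W2 [_ [vW1 [w1 [A1 [w1n [eV1 eW1]]]]]]
    [_ [vW2 [w2 [A2 [w2n [eV2 eW2]]]]]] nb1 nb2.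
  have w21 : wsimL w2 w1.
    have : wclassL w1 w1 := wsim_refl w1 w1n.
    by rewrite -eV1 eV2.
  have eJ : brk w1 = brk w2 by apply: esym; exact: wsim_brk.
  have props (w : seq P) A W : w <> [::] ->
      vertex h tau tauinv F gam br a b W -> W = wclassL (rcons w A) ->
      ~ basis_vertex h tau tauinv F gam br a b W ->
      Phi (brk w) A !=set0 /\ Phi (brk w) A <> pc A.
    move=> wn [w' [w'n [ne eW']]] eW nb.
    rewrite -brk_rcons //.
    have : wclassL (rcons w A) (rcons w A) := wsim_refl _ (rcons_ne w A).
    rewrite -eW eW' => /wsim_brk e; rewrite -e; split => // ep.
    rewrite e in ep.
    apply: nb; split; first by exists w'.
    exists A; rewrite eW; apply: wclass_eq.
    exists w, [::], [::], A; split; rewrite ?cats0 //; exact: brk1.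
  have [n1 p1] := props w1 A1 W1 w1n vW1 eW1 nb1.
  have [n2 p2] := props w2 A2 W2 w2n vW2 eW2 nb2.
  rewrite -eJ in n2 p2.
  have [B gB] : exists B, good (brk w1) B.
    case/lastP: w1 w1n eV1 eW1 w21 eJ n1 p1 n2 p2 => // p B _ _ _ _ _ n1 _ _ _.
    case: (good_brk p B) => [e|g]; last by exists B.
    by move: n1; rewrite e Phi0 => -[].
  have eA := unique_partial (brk w1) B A1 A2 gB n1 p1 n2 p2.
  subst A2; rewrite eW1 eW2; apply: wclass_eq.
  have [u [u' [s [C [e1 e2 b1 b2]]]]] := wsim_sym _ _ w21.
  exists u, u', (rcons s A1), C; split => //; by rewrite -rcons_cat ?e1 ?e2.
move=> V W HV HW [_ [_ [w [A [wn [eV eW]]]]]] [w0 [eV0 hw0]] [w1 [eW1 hw1]] HW0.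
have [k0 [gk0 eHV mk0]] := height_kmax A w0 HV hw0.
have [k1 [gk1 eHW mk1]] := height_kmax A w1 HW hw1.
have w0n : w0 <> [::] by case: gk0 => + _; case: (w0).
have w1n : w1 <> [::] by case: gk1 => + _; case: (w1).
have ww0 : wsimL w w0.
  have : wclassL w0 w0 := wsim_refl w0 w0n.
  by rewrite -eV0 eV.
have ww1 : wsimL (rcons w A) w1.
  have : wclassL w1 w1 := wsim_refl w1 w1n.
  by rewrite -eW1 eW.
have [k [gk mk]] := kmax_exists A w wn.
have [k' [gk' mk']] := kmax_exists A (rcons w A) (rcons_ne w A).
have i0 := kmax_inv A w w0 k k0 ww0 gk mk gk0 mk0.
have i1 := kmax_inv A (rcons w A) w1 k' k1 ww1 gk' mk' gk1 mk1.
rewrite size_rcons /= in i1.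
have k'w : (k' < size w)%N by lia.
have kw : (k < size w)%N by case: gk.
have l1 : (k' <= k)%N.
  rewrite leqNgt; apply/negP => kk'; apply: (mk k' kk').
  by apply/(gpos_rcons A w A k' k'w).
have l2 : (k <= k')%N.
  rewrite leqNgt; apply/negP => kk'; apply: (mk' k kk').
  by apply/(gpos_rcons A w A k kw).
lia.
Qed.
End Main.

Theorem mainTheorem7 (R : realType) (T : topologicalType)
  (h : R -> T) (tau tauinv : T -> T) (F : T -> T)
  (Lambda : finType) (gam : Lambda -> R -> T)
  (P : finType) (br : P -> Lambda) (a b : P -> R)
  (lab : P -> Lambda) (per : P -> int) :
  lifted_graph h tau tauinv ->
  continuous F ->
  (forall x, F (tau x) = tau (F x)) ->
  sun_like h F gam ->
  basic_partition h tau tauinv F gam br a b lab per ->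
  (forall V W1 W2 : set (seq P),
     arrow h tau tauinv F gam br a b V W1 ->
     arrow h tau tauinv F gam br a b V W2 ->
     ~ basis_vertex h tau tauinv F gam br a b W1 ->
     ~ basis_vertex h tau tauinv F gam br a b W2 -> W1 = W2) /\
  (forall (V W : set (seq P)) (HV HW : nat),
     arrow h tau tauinv F gam br a b V W ->
     vheight h tau tauinv F gam br a b V HV ->
     vheight h tau tauinv F gam br a b W HW ->
     (0 < HW)%N -> HW = HV.+1).
Proof.
exact: (main_sec R T h tau tauinv F Lambda gam P br a b lab per).
Qed.
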